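(* Let $\gamma>0$ and let $S\subset(0,1)$ be a set of size $d$, and let $\mathbf{x}\in[0,1]^d$ list the elements of $S$ in a uniformly random order. Then the following procedure is ''successful'' with probability at least $1-\exp(-\Omega(d^{2\gamma}))$, and whenever it is successful it outputs $\operatorname{med}(\mathbf{x})$. Procedure: (1) partition the $d$ entries of $\mathbf{x}$ into consecutive blocks $\mathbf{x}_1,\dots,\mathbf{x}_q$ of size $\lceil d^{2/3}\rceil$ (the last block possibly smaller); for $i\in[q-1]$ let $\mathbf{y}_i$ consist of the elements of $\mathbf{x}_i$ whose ranks within $\mathbf{x}_i$ belong to $\{\lfloor \frac{d^{2/3}}{2}-d^{\frac13+\gamma}\rfloor,\dots,\lceil \frac{d^{2/3}}{2}+d^{\frac13+\gamma}\rceil\}$, and let $\mathbf{y}_q=\mathbf{x}_q$; (2) compare each entry of the concatenation $(\mathbf{y}_1,\dots,\mathbf{y}_q)$ with all entries of $\mathbf{x}$, and output the entry that is larger than exactly $d/2-1$ entries of $\mathbf{x}$ (if none exists, the procedure fails). The procedure is called successful if some $\mathbf{y}_i$, $i\in[q]$, contains $\operatorname{med}(\mathbf{x})$.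
   Context: $\operatorname{med}(\mathbf{x})$ denotes the median of the entries of $\mathbf{x}$ (the element of rank $d/2$ in ascending order). Ranks are positions in ascending sorted order. *)

(* Defs.v *)
From HB Require Import structures.
From mathcomp Require Import all_boot all_order all_algebra all_fingroup.
From mathcomp Require Import all_classical all_reals.
From mathcomp Require Import sequences exp.
Set Implicit Arguments. Unset Strict Implicit. Unset Printing Implicit Defensive.
Import Order.TTheory GRing.Theory Num.Theory.
Local Open Scope ring_scope.

Section Median.
Variable R : realType.
Variable gamma : R.

Definition nsmaller (x : seq R) (e : R) : nat := count (fun z => z < e) x.

Definition rank_in (s : seq R) (e : R) : nat := (nsmaller s e).+1.

(* target count: the median is larger than exactly d/2 - 1 entries *)
Definition med_cnt (x : seq R) : nat := ((size x)./2 - 1)%N.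

(* med(x): the element of (1-indexed) rank d/2 in ascending order *)
Definition med (x : seq R) : R := nth 0 (sort <=%R x) (med_cnt x).

Definition dR (x : seq R) : R := (size x)%:R.

Definition blk (x : seq R) : nat := absz (Num.ceil (dR x `^ (2 / 3))).

Definition nblocks (x : seq R) : nat := ((size x + blk x - 1) %/ blk x)%N.

(* i-th block (0-indexed, i < q) *)
Definition block (x : seq R) (i : nat) : seq R :=
  take (blk x) (drop (i * blk x) x).

Definition rank_lo (x : seq R) : int :=
  Num.floor (dR x `^ (2 / 3) / 2 - dR x `^ (3^-1 + gamma)).
Definition rank_hi (x : seq R) : int :=
  Num.ceil (dR x `^ (2 / 3) / 2 + dR x `^ (3^-1 + gamma)).

Definition yblock (x : seq R) (i : nat) : seq R :=
  if (i.+1 < nblocks x)%N then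
    [seq e <- block x i | (rank_lo x <= (rank_in (block x i) e)%:Z)
                          && ((rank_in (block x i) e)%:Z <= rank_hi x)]
  else block x i.

Definition candidates (x : seq R) : seq R :=
  flatten [seq yblock x i | i <- iota 0 (nblocks x)].

Definition output (x : seq R) : option R :=
  ohead [seq e <- candidates x | nsmaller x e == med_cnt x].

Definition successful (x : seq R) : bool :=
  has (fun i => med x \in yblock x i) (iota 0 (nblocks x)).

End Median.

(* the ordering of S = image of s given by the permutation sigma *)
Definition ordering (R : realType) (d : nat) (s : 'I_d -> R) (sigma : 'S_d)
  : seq R := [seq s (sigma i) | i <- enum 'I_d].

Definition succ_prob (R : realType) (gamma : R) (d : nat) (s : 'I_d -> R) : R :=
  (#|[set sigma : 'S_d | successful gamma (ordering s sigma)]|)%:R / (d`!)%:R.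

(* Main.v *)
Require Import Defs.
From HB Require Import structures.
From mathcomp Require Import all_boot all_order all_algebra all_fingroup.
From mathcomp Require Import all_classical all_reals.
From mathcomp Require Import sequences exp.
From mathcomp Require Import zify ring lra.
Import Order.TTheory GRing.Theory Num.Theory.
Local Open Scope ring_scope.

Definition TJ (d : nat) (X J : {set 'I_d}) : {set 'S_d} :=
  [set s : 'S_d | [forall j in J, s j \in X]].
Arguments TJ {d}.

Lemma TJ_step (d : nat) (X J : {set 'I_d}) (j0 : 'I_d) : j0 \notin J ->
  (#|TJ X (j0 |: J)| * (d - #|J|) = #|TJ X J| * (#|X| - #|J|))%N.
Proof.
move=> j0J.
pose C := ~: J.
have cardC : #|C| = (d - #|J|)%N.
  have h := cardsC J; rewrite card_ord in h.
  apply/eqP; rewrite -(eqn_add2l #|J|) h subnKC //.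
  by have := max_card J; rewrite card_ord.
have H1 : forall s, s \in TJ X J -> #|[set j in C | s j \in X]| = (#|X| - #|J|)%N.
  move=> s; rewrite inE => /forall_inP sJ.
  have -> : [set j in C | s j \in X] = (s @^-1: X) :\: J.
    by apply/setP => j; rewrite !inE andbC.
  rewrite cardsDS ?(card_preimset _ (@perm_inj _ s)) //.
  by apply/fintype.subsetP => j /sJ; rewrite inE.
have H2 : forall j, j \in C -> #|[set s in TJ X J | s j \in X]| = #|TJ X (j0 |: J)|.
  move=> j; rewrite inE => jJ.
  pose t := tperm j0 j.
  have -> : [set s in TJ X J | s j \in X] = (mulg t) @^-1: TJ X (j0 |: J).
    apply/setP => s; rewrite !inE.
    apply/idP/idP.
    - case/andP => /forall_inP sJ sjX; apply/forall_inP => i.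
      rewrite !inE permM => /orP [/eqP -> | iJ]; first by rewrite tpermL.
      rewrite tpermD ?sJ //.
        by apply/eqP => e; move: j0J; rewrite e iJ.
      by apply/eqP => e; move: jJ; rewrite e iJ.
    - move/forall_inP => H; apply/andP; split.
        apply/forall_inP => i iJ.
        have := H i; rewrite !inE iJ orbT permM tpermD => [->//||].
          by apply/eqP => e; move: j0J; rewrite e iJ.
        by apply/eqP => e; move: jJ; rewrite e iJ.
      by have := H j0; rewrite !inE eqxx permM tpermL => ->.
  by rewrite card_preimset //; apply: mulgI.
have E1 : (\sum_(s in TJ X J) #|[set j in C | s j \in X]| = #|TJ X J| * (#|X| - #|J|))%N.
  by rewrite (eq_bigr _ H1) sum_nat_const.
have E2 : (\sum_(j in C) #|[set s in TJ X J | s j \in X]| = #|TJ X (j0 |: J)| * (d - #|J|))%N.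
  by rewrite (eq_bigr _ H2) sum_nat_const cardC mulnC.
rewrite -E1 -E2.
have cardE (T : finType) (A : {set T}) (P : pred T) :
    #|[set x in A | P x]| = (\sum_(x in A) (P x : nat))%N.
  rewrite -sum1_card big_mkcond /= [RHS]big_mkcond /=.
  by apply: eq_bigr => x _; rewrite !inE; case: (x \in A); case: (P x).
under eq_bigr do rewrite cardE.
rewrite exchange_big /=.
by apply: eq_bigr => j _; rewrite cardE.
Qed.


Lemma TJ_nat (d : nat) (X J : {set 'I_d}) (j0 : 'I_d) : j0 \notin J ->
  (#|TJ X (j0 |: J)| * d <= #|TJ X J| * #|X|)%N.
Proof.
move=> j0J; have := @TJ_step d X J j0 j0J.
have hJ : (#|j0 |: J| <= d)%N by have := max_card (j0 |: J); rewrite card_ord.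
rewrite cardsU1 j0J /= in hJ.
have hX : (#|X| <= d)%N by have := max_card X; rewrite card_ord.
move: (#|TJ X (j0 |: J)|) (#|TJ X J|) (#|X|) (#|J|) hJ hX => a b x n hn hx h.
have h2 : (a * d * (d - n) <= b * x * (d - n))%N.
  have -> : (a * d * (d - n) = a * (d - n) * d)%N by rewrite mulnAC.
  rewrite h.
  have : (d * (x - n) <= x * (d - n))%N by nia.
  move=> h3; have := leq_mul (leqnn b) h3; lia.
rewrite leq_pmul2r in h2 => //; lia.
Qed.

Lemma TJ_bound (R : realType) d (X J : {set 'I_d}) : (0 < d)%N ->
  (#|TJ X J|%:R : R) <= d`!%:R * (#|X|%:R / d%:R) ^+ #|J|.
Proof.
move=> d0.
move: {2}#|J| (erefl #|J|) => n; elim: n J => [|n IH] J cJ.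
  move/eqP: cJ; rewrite cards_eq0 => /eqP ->.
  rewrite ?cards0 expr0 mulr1 ler_nat.
  have -> : TJ X finset.set0 = [set: {perm (ordinal d)}] by apply/setP => s; rewrite !inE; apply/forall_inP => i; rewrite inE.
  by rewrite cardsT card_Sn.
have : (0 < #|J|)%N by rewrite cJ.
case/card_gt0P => j0 j0J.
have jn : j0 \notin J :\ j0 by rewrite !inE eqxx.
have cJ' : #|J :\ j0| = n by move: cJ; rewrite (cardsD1 j0 J) j0J add1n => -[].
have := @TJ_nat d X _ _ jn; rewrite finset.setD1K //.
move: (IH _ cJ'); set T' := #|TJ X (J :\ j0)|; set T := #|TJ X J| => hT' hT.
have dpos : (0 : R) < d%:R by rewrite ltr0n.
rewrite cJ exprSr mulrA.
have : (T%:R * d%:R : R) <= T'%:R * #|X|%:R by rewrite -!natrM ler_nat.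
move=> h; rewrite -(ler_pM2r dpos) (le_trans h) //.
have -> : forall a b : R, a * (b / d%:R) * d%:R = a * b by move=> a b; rewrite -mulrA divfK // gt_eqF.
by rewrite ler_wpM2r // ?ler0n // -cJ'.
Qed.
Local Open Scope ring_scope.

Lemma expR_le1D (R : realType) (t : R) : 0 <= t -> expR (t - t ^+ 2) <= 1 + t.
Proof.
move=> t0.
have h1 := expR_ge1Dx (- (t - t ^+ 2)).
have q0 : 0 < 1 + - (t - t ^+ 2) by nra.
have e : expR (t - t ^+ 2) * expR (- (t - t ^+ 2)) = 1 by rewrite -expRD subrr expR0.
rewrite -(ler_pM2r q0) (le_trans (y := expR (t - t ^+ 2) * expR (- (t - t ^+ 2)))) //.
  by rewrite ler_pM2l ?expR_gt0.
rewrite e; nra.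
Qed.
Lemma chernoff (R : realType) d (A X : {set 'I_d}) (k : nat) (a : R) :
  (0 < d)%N -> (0 < #|A|)%N -> 0 <= a ->
  #|A|%:R * (#|X|%:R / d%:R) + a <= k%:R -> (k <= #|A|)%N ->
  (#|[set s : 'S_d | (k <= #|[set j in A | s j \in X]|)%N]|%:R : R)
    <= d`!%:R * expR (- (a ^+ 2 / (4 * #|A|%:R))).
Proof.
move=> d0 A0 a0 hk kn.
set n := #|A|; set p : R := #|X|%:R / d%:R.
have n0 : (0 : R) < n%:R by rewrite ltr0n.
have p0 : 0 <= p by rewrite divr_ge0 ?ler0n.
set t := a / (2 * n%:R).
have t0 : 0 <= t by rewrite divr_ge0 // mulr_ge0 ?ler0n.
have tdef : t = a / (2 * n%:R) by [].
have pdef : p = #|X|%:R / d%:R by [].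
clearbody t p.
set r := 1 + t.
have r1 : 1 <= r by rewrite /r lerDl.
set K := fun s : 'S_d => #|[set j in A | s j \in X]|.
set E := [set s : 'S_d | (k <= K s)%N].
pose F (s : 'S_d) (i : 'I_d) : R := if (i \in A) && (s i \in X) then t else 0.
pose G (i : 'I_d) : R := if i \in A then t * p else 0.
have S1 : #|E|%:R * r ^+ k <= \sum_s r ^+ K s.
  rewrite -sumr_const mulr_suml [X in _ <= X](bigID (mem E)) /= -[X in X <= _]addr0.
  apply: lerD; last by apply: sumr_ge0 => s _; rewrite exprn_ge0 // (le_trans _ r1).
  apply: ler_sum => s; rewrite inE mul1r => ks.
  by rewrite ler_weXn2l.
have S2 : forall s, r ^+ K s = \sum_(J in {set 'I_d}) \prod_i (if i \in J then F s i else 1).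
  move=> s; rewrite -bigA_distr.
  rewrite /K -prodr_const big_mkcond /=.
  by apply: eq_bigr => i _; rewrite /F !inE; case: (_ && _); rewrite ?addr0 ?add0r // addrC.
have S3 : forall J : {set 'I_d}, \sum_s \prod_i (if i \in J then F s i else 1)
    <= d`!%:R * \prod_i (if i \in J then G i else 1).
  move=> J; rewrite -big_mkcond /=.
  under eq_bigr do rewrite -big_mkcond /=.
  case: (boolP (J \subset A)) => JA.
    have -> : \prod_(i in J) G i = (t * p) ^+ #|J|.
      rewrite -prodr_const; apply: eq_bigr => i iJ; rewrite /G.
      by rewrite (fintype.subsetP JA).
    have HF : forall s, \prod_(i in J) F s i = if s \in TJ X J then t ^+ #|J| else 0.
      move=> s; case: ifP => sT.
        rewrite -prodr_const; apply: eq_bigr => i iJ; rewrite /F.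
        rewrite (fintype.subsetP JA) //=.
        by move: sT; rewrite inE => /forall_inP ->.
      move: sT; rewrite inE => /forall_inP; case/boolP: [forall (i | i \in J), s i \in X].
        by move/forall_inP.
      rewrite negb_forall_in => /existsP [i /andP [iJ siX]] _.
      by rewrite (bigD1 i) //= /F (negbTE siX) andbF mul0r.
    under eq_bigr => s _ do rewrite HF.
    rewrite -big_mkcond /= sumr_const -[_ *+ #|TJ X J|]mulr_natr exprMn mulrCA.
    by rewrite ler_wpM2l ?exprn_ge0 // pdef; exact: TJ_bound.
  have [i iJ iA] : exists2 i, i \in J & i \notin A.
    by move/fintype.subsetPn: JA => [i iJ iA]; exists i.
  rewrite [X in _ <= _ * X](bigD1 i) //= /G (negbTE iA) mul0r mulr0.
  rewrite big1 // => s _.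
  by rewrite (bigD1 i) //= /F (negbTE iA) mul0r.
have S4 : \sum_(J in {set 'I_d}) \prod_i (if i \in J then G i else 1) = (1 + t * p) ^+ n.
  rewrite -(@bigA_distr R 0 1 *%R +%R _ G (fun=> 1)) /n -prodr_const [RHS]big_mkcond /=.
  by apply: eq_bigr => i _; rewrite /G; case: (i \in A); rewrite ?add0r // addrC.
have S5 : #|E|%:R * r ^+ k <= d`!%:R * (1 + t * p) ^+ n.
  rewrite (le_trans S1) //.
  under eq_bigr do rewrite S2.
  rewrite exchange_big /= -S4 mulr_sumr.
  by apply: ler_sum => J _; exact: S3.
have e1 : (1 + t * p) ^+ n <= expR (n%:R * (t * p)).
  rewrite expRM_natl; apply: lerXn2r; rewrite ?nnegrE ?expR_ge0 ?addr_ge0 ?mulr_ge0 //.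
  exact: expR_ge1Dx.
have e2 : expR (k%:R * (t - t ^+ 2)) <= r ^+ k.
  rewrite expRM_natl; apply: lerXn2r; rewrite ?nnegrE ?expR_ge0 ?addr_ge0 ?mulr_ge0 //.
  exact: expR_le1D.
have e3 : n%:R * (t * p) - k%:R * (t - t ^+ 2) <= - (a ^+ 2 / (4 * n%:R)).
  have h1 : k%:R * t ^+ 2 <= n%:R * t ^+ 2.
    by rewrite ler_wpM2r ?exprn_ge0 // ler_nat.
  have h2 : (n%:R * p + a) * t <= k%:R * t by apply: ler_wpM2r => //; rewrite pdef.
  have h3 : - (a * t) + n%:R * t ^+ 2 = - (a ^+ 2 / (4 * n%:R)).
    rewrite tdef; field; by rewrite gt_eqF.
  rewrite -h3; nra.
have kpos : 0 < expR (k%:R * (t - t ^+ 2)) := expR_gt0 _.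
have : #|E|%:R * expR (k%:R * (t - t ^+ 2)) <= d`!%:R * expR (n%:R * (t * p)).
  apply: le_trans (le_trans S5 _).
    by rewrite ler_wpM2l ?ler0n.
  by rewrite ler_wpM2l ?ler0n.
rewrite -ler_pdivlMr // => h; apply: (le_trans h).
rewrite -mulrA ler_wpM2l ?ler0n // -expRN -expRD ler_expR.
by rewrite -mulNr; apply: le_trans e3; rewrite mulNr.
Qed.
Lemma count_iota_lt i n : (i <= n)%N -> count (fun j => (j < i)%N) (iota 0 n) = i.
Proof.
move=> hi; rewrite -(subnKC hi) iotaD count_cat add0n.
rewrite (@eq_in_count _ _ predT (iota 0 i)); last by move=> j; rewrite mem_iota.
rewrite count_predT size_iota.
rewrite (@eq_in_count _ _ pred0 (iota i _)); last first.
  by move=> j; rewrite mem_iota /= => /andP [h _]; rewrite ltnNge h.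
by rewrite count_pred0 addn0.
Qed.

Lemma count_lt_nth_sort (R : realType) (x : seq R) i : uniq x -> (i < size x)%N ->
  count (fun z => z < nth 0 (sort <=%R x) i) x = i.
Proof.
move=> ux hi.
set s := sort <=%R x.
have ps : perm_eq s x by rewrite perm_sort.
have ss : sorted <%R s by rewrite sort_lt_sorted.
have sz : size s = size x by rewrite size_sort.
rewrite -(seq.permP ps) -[X in count _ X](mkseq_nth 0 s) count_map.
rewrite -[in RHS](@count_iota_lt i (size s)); last by rewrite sz ltnW.
apply: eq_in_count => j; rewrite mem_iota add0n /= => hj.
by rewrite (lt_sorted_ltn_nth 0 ss) // inE sz.
Qed.

Lemma nth_sort_of_count (R : realType) (x : seq R) (e : R) i : uniq x -> (i < size x)%N ->
  e \in x -> count (fun z => z < e) x = i -> e = nth 0 (sort <=%R x) i.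
Proof.
move=> ux hi ex hc.
set s := sort <=%R x.
have ps : perm_eq s x by rewrite perm_sort.
have es : e \in s by rewrite (perm_mem ps).
have ji : (index e s < size x)%N by rewrite -(size_sort <=%R x) index_mem.
have := @count_lt_nth_sort R x _ ux ji; rewrite -/s nth_index // hc => ->.
by rewrite nth_index.
Qed.

Lemma block_sub (R : realType) (gamma : R) x i e : e \in yblock gamma x i -> e \in x.
Proof.
rewrite /yblock /block; case: ifP => _; first rewrite mem_filter => /andP [_].
  by move/mem_take/mem_drop.
by move/mem_take/mem_drop.
Qed.

Lemma part2 (R : realType) (gamma : R) (x : seq R) : uniq x ->
  successful gamma x -> output gamma x = Some (med x).
Proof.
move=> ux /hasP [i ii hi].
have mc : med x \in candidates gamma x.
  by apply/flattenP; exists (yblock gamma x i) => //; apply: map_f.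
have mx : med x \in x by apply: block_sub hi.
have hs : (med_cnt x < size x)%N.
  have : (0 < size x)%N by case: (x) mx.
  rewrite /med_cnt; move: (size x) => n hn.
  have : (n./2 <= n)%N by rewrite -{2}(odd_double_half n); lia.
  lia.
have hc : forall e, e \in candidates gamma x -> nsmaller x e == med_cnt x -> e = med x.
  move=> e ec /eqP he; apply: nth_sort_of_count => //.
  by move: ec => /flattenP [l /mapP [j _ ->]] /block_sub.
have hm : nsmaller x (med x) == med_cnt x.
  by rewrite /nsmaller /med count_lt_nth_sort.
rewrite /output.
have : med x \in [seq e <- candidates gamma x | nsmaller x e == med_cnt x].
  by rewrite mem_filter hm.
have : forall e, e \in [seq e <- candidates gamma x | nsmaller x e == med_cnt x] -> e = med x.
  by move=> e; rewrite mem_filter => /andP [h1 h2]; apply: hc.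
case: [seq e <- candidates gamma x | nsmaller x e == med_cnt x] => // y l H _ /=.
by rewrite (H y) // inE eqxx.
Qed.
Lemma real_facts (R : realType) (g : R) (d : nat) : 0 < g -> (1 <= d)%N ->
  let B' := d%:R `^ (2/3) in let t := d%:R `^ (3^-1 + g) in
  let B := `|Num.ceil B'|%N in
  [/\ 1 <= B', B' <= d%:R, B' <= B%:R & B%:R <= B' + 1] /\
  [/\ (1 <= B <= d)%N, 1 <= t & t ^+ 2 = B' * d%:R `^ (2 * g)].
Proof.
move=> g0 d1 B' t B.
have d1R : (1 : R) <= d%:R by rewrite ler1n.
have hB1 : 1 <= B' by rewrite /B' -[X in X <= _](powRr0 d%:R); apply: ler_powR => //; lra.
have hBd : B' <= d%:R by rewrite /B' ler1_powR //; lra.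
have c0 : (0 <= Num.ceil B') by rewrite ceil_ge0; lra.
have BR : B%:R = (Num.ceil B')%:~R :> R by rewrite natr_absz ger0_norm.
have hB2 : B' <= B%:R by rewrite BR ceil_ge.
have hB3 : B%:R <= B' + 1 by rewrite BR; have := ceilB1_lt B'; rewrite intrD; lra.
do 2 split => //.
- apply/andP; split.
    by rewrite -(ler_nat R); lra.
  have : (Num.ceil B' <= d%:Z) by rewrite ceil_le_int.
  by rewrite -(ler_nat R) BR; rewrite -(ler_int R).
- rewrite /t -[X in X <= _](powRr0 d%:R); apply: ler_powR => //; rewrite addr_ge0 ?invr_ge0 //; lra.
- rewrite /t -powR_mulrn; last exact: powR_ge0.
  rewrite -powRrM /B' -powRD; last by apply/implyP => _; rewrite pnatr_eq0 -lt0n.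
  by congr (_ `^ _); field.
Qed.

Lemma growth (R : realType) (g : R) : 0 < g -> exists d0 : nat, forall d : nat,
  (d0 <= d)%N -> (1 <= d)%N /\ 2 * d%:R <= expR (d%:R `^ (2 * g) / 64).
Proof.
move=> g0.
set M : R := 64 * 2 `^ g / g.
have M0 : 0 < M by rewrite /M divr_gt0 // mulr_gt0 // powR_gt0.
exists (`|Num.ceil (M `^ g^-1)|%N).+1 => d hd.
have d1 : (1 <= d)%N by apply: leq_trans hd.
split => //.
have dR : M `^ g^-1 <= d%:R.
  have c0 : 0 <= Num.ceil (M `^ g^-1) by rewrite ceil_ge0; have := powR_ge0 M g^-1; lra.
  have h : M `^ g^-1 <= (`|Num.ceil (M `^ g^-1)|%N)%:R.
    by rewrite natr_absz ger0_norm // ceil_ge.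
  apply: (le_trans h); rewrite ler_nat; exact: ltnW.
set y := d%:R `^ g.
have My : M <= y.
  have := @ge0_ler_powR R g (ltW g0) (M `^ g^-1) (d%:R).
  rewrite !nnegrE => /(_ (powR_ge0 _ _) (ler0n _ _) dR).
  rewrite -powRrM mulVf ?gt_eqF // powRr1 //; exact: ltW.
have y0 : 0 < y by rewrite /y powR_gt0 // ltr0n.
have d0R : (0 : R) < 2 * d%:R by rewrite mulr_gt0 // ltr0n.
have e1 : ln (2 * d%:R) <= 2 `^ g * y / g.
  have h := @le_ln1Dx R ((2 * d%:R) `^ g - 1).
  have e : 1 + ((2 * d%:R) `^ g - 1) = (2 * d%:R) `^ g by rewrite addrC subrK.
  rewrite e ln_powR in h.
  have : g * ln (2 * d%:R) <= (2 * d%:R) `^ g - 1.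
    by apply: h; have := powR_gt0 g d0R; lra.
  rewrite powRM ?ler0n // -/y => h2.
  rewrite ler_pdivlMr // mulrC; lra.
have e2 : 2 `^ g * y / g <= d%:R `^ (2 * g) / 64.
  have ey : d%:R `^ (2*g) = y ^+ 2 by rewrite mulrC powRrM powR_mulrn ?powR_ge0.
  rewrite ey -subr_ge0.
  have -> : y ^+ 2 / 64 - 2 `^ g * y / g = y * (y - M) / 64.
    by rewrite /M; field; rewrite gt_eqF.
  by rewrite divr_ge0 // mulr_ge0 ?subr_ge0 // ltW.
rewrite -[X in X <= _]lnK; last by rewrite posrE.
rewrite ler_expR; exact: le_trans e1 e2.
Qed.
Lemma count3 (R : realType) (b : seq R) m : uniq b -> m \in b ->
  (count (fun z => (z < m)%R) b + count (fun z => (m < z)%R) b + 1 = size b)%N.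
Proof.
move=> ub mb.
have h1 := count_predUI (fun z => m < z) (pred1 m) b.
have e1 : count (predI (fun z => m < z) (pred1 m)) b = 0%N.
  by apply/eqP; rewrite -leqn0 leqNgt -has_count; apply/hasP => -[z _ /= /andP [h /eqP e]]; move: h; rewrite e ltxx.
have e2 : count (pred1 m) b = 1%N by have := count_uniq_mem m ub; rewrite mb.
rewrite e1 e2 addn0 in h1.
have e3 : count (predU (fun z => m < z) (pred1 m)) b = count (predC (fun z => z < m)) b.
  by apply: eq_count => z /=; rewrite -leNgt le_eqVlt orbC eq_sym.
rewrite e3 in h1.
by rewrite -addnA -h1 count_predC.
Qed.

Lemma med_in (R : realType) (x : seq R) : (0 < size x)%N -> med x \in x.
Proof.
move=> hx.
have hs : (med_cnt x < size x)%N.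
  rewrite /med_cnt; move: (size x) hx => n hn.
  have : (n./2 <= n)%N by rewrite -{2}(odd_double_half n); lia.
  lia.
have ps : perm_eq (sort <=%R x) x by rewrite perm_sort.
by rewrite -(perm_mem ps) /med mem_nth // size_sort.
Qed.

Lemma fail_block (R : realType) (g : R) (x : seq R) : (0 < size x)%N -> (0 < blk x)%N ->
  ~~ successful g x -> exists i, [/\ (i.+1 < nblocks x)%N, med x \in block x i &
    ((rank_in (block x i) (med x))%:Z < rank_lo g x) || (rank_hi g x < (rank_in (block x i) (med x))%:Z)].
Proof.
move=> hx hB hf.
have mx := @med_in R x hx.
set B := blk x in hB *.
set j0 := index (med x) x.
have j0d : (j0 < size x)%N by rewrite index_mem.
set i := (j0 %/ B)%N.
have iq : (i < nblocks x)%N.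
  rewrite /nblocks -/B leq_divRL // mulSn.
  have := leq_trunc_div j0 B; rewrite -/i; lia.
have mb : med x \in block x i.
  have hr : (j0 %% B < B)%N by rewrite ltn_mod.
  have ej : j0 = (i * B + j0 %% B)%N by rewrite /i -divn_eq.
  have <- : nth 0 (block x i) (j0 %% B) = med x.
    by rewrite /block nth_take // nth_drop -ej nth_index.
  apply: mem_nth; rewrite /block size_take size_drop.
  case: ifP => // _.
  move: ej j0d; rewrite -/B; move: (j0 %% B)%N (i * B)%N => r k; clearbody j0.
  by move=> -> h; rewrite ltn_subRL.
exists i.
have : (i.+1 < nblocks x)%N.
  rewrite ltn_neqAle iq andbT; apply/negP => /eqP ei.
  move: hf; rewrite /successful => /hasP; apply; exists i; first by rewrite mem_iota.
  by rewrite /yblock ei ltnn.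
move=> iq'; split => //.
have : med x \notin yblock g x i.
  by apply/negP => h; move/hasP: hf; apply; exists i => //; rewrite mem_iota.
rewrite /yblock iq' mem_filter mb andbT negb_and -!ltNge => /orP [h|h]; apply/orP; [left|right] => //.
Qed.

Lemma chernoff2 (R : realType) d (A X : {set 'I_d}) (k : nat) (a : R) :
  (0 < d)%N -> (0 < #|A|)%N -> 0 <= a ->
  #|A|%:R * (#|X|%:R / d%:R) + a <= k%:R ->
  (#|[set s : 'S_d | (k <= #|[set j in A | s j \in X]|)%N]|%:R : R)
    <= d`!%:R * expR (- (a ^+ 2 / (4 * #|A|%:R))).
Proof.
move=> d0 A0 a0 hk; case: (leqP k #|A|) => kA; first exact: chernoff.
have -> : [set s : 'S_d | (k <= #|[set j in A | s j \in X]|)%N] = finset.set0.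
  apply/setP => s; rewrite !inE; apply/negbTE; rewrite -ltnNge.
  apply: leq_ltn_trans kA; apply: subset_leq_card; apply/fintype.subsetP => j.
  by rewrite inE => /andP [].
by rewrite cards0 mulr_ge0 ?ler0n ?expR_ge0.
Qed.

Lemma count_card d (P : seq 'I_d) (Q : pred 'I_d) : uniq P ->
  count Q P = #|[set j in [set j in P] | Q j]|.
Proof.
move=> uP; rewrite -size_filter.
have uf : uniq (seq.filter Q P) by apply: filter_uniq.
rewrite -(card_uniqP uf); apply: eq_card => j; rewrite !inE mem_filter.
by rewrite andbC.
Qed.

Lemma union_bound (T : finType) (F : {set T}) (n : nat) (E : nat -> {set T}) :
  (forall x, x \in F -> exists2 i, (i < n)%N & x \in E i) ->
  (#|F| <= \sum_(i < n) #|E i|)%N.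
Proof.
elim: n F => [|n IH] F H.
  rewrite big_ord0 leqn0 cards_eq0; apply/eqP/setP => x; rewrite inE.
  by apply/negbTE/negP => /H [].
rewrite big_ord_recr /= -(cardsID (E n) F).
rewrite addnC leq_add //.
  apply: IH => x; rewrite !inE => /andP [xE xF].
  case: (H x xF) => i; rewrite ltnS leq_eqVlt => /orP [/eqP -> | ilt] xi.
    by rewrite xi in xE.
  by exists i.
by apply: subset_leq_card; apply: subsetIr.
Qed.

Lemma arith1 (Ks Kl B k2 : nat) (lo : int) : (Ks + Kl + 1 = B)%N ->
  (Ks.+1)%:Z < lo -> k2%:Z = B%:Z + 1 - lo -> (k2 <= Kl)%N.
Proof. lia. Qed.

Lemma arith2 (Ks k1 : nat) (hi : int) : hi < (Ks.+1)%:Z -> k1%:Z = hi -> (k1 <= Ks)%N.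
Proof. lia. Qed.

Lemma arith3 (B : nat) (lo : int) : lo <= B%:Z -> 0 <= B%:Z + 1 - lo.
Proof. lia. Qed.

Lemma arith4 (i B d : nat) : (i.+1 * B <= d)%N -> (B <= d - i * B)%N.
Proof. rewrite mulSn; lia. Qed.

Lemma arith5 (d B : nat) : (0 < d)%N -> (0 < B)%N -> (d + B - 1 < d.+1 * B)%N.
Proof. move=> h1 h2; rewrite mulSn; nia. Qed.

Lemma arith6 (B X d : nat) : (X * 2 <= d + 1)%N -> (B <= d)%N -> (B * X * 2 <= (B + 1) * d)%N.
Proof. nia. Qed.

Lemma part1 (R : realType) (gamma : R) : 0 < gamma ->
  exists c : R, 0 < c /\
     exists d0 : nat, forall (d : nat) (s : 'I_d -> R),
       (d0 <= d)%N -> injective s -> (forall i, 0 < s i < 1) ->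
       1 - expR (- (c * d%:R `^ (2 * gamma))) <= succ_prob gamma s.
Proof.
move=> g0; exists (64^-1); split; first by rewrite invr_gt0.
have [d0 hd0] := @growth R gamma g0; exists d0 => d s hd sinj _.
have [d1 hgrow] := hd0 d hd.
pose x := fun σ : 'S_d => ordering s σ.
have sz : forall σ, size (x σ) = d by move=> σ; rewrite /x /ordering size_map size_enum_ord.
have ux : forall σ, uniq (x σ).
  move=> σ; rewrite /x /ordering map_inj_uniq ?enum_uniq //.
  by move=> i j /sinj /perm_inj.
have pe : forall σ, perm_eq (x σ) (x 1%g).
  move=> σ; rewrite /x /ordering.
  have e1 : [seq s (σ i) | i <- enum 'I_d] = map s (map σ (enum 'I_d)) by elim: (enum _) => //= ? ? ->.
  rewrite e1.
  have -> : [seq s ((1%g : 'S_d) i) | i <- enum 'I_d] = map s (enum 'I_d).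
    by apply: eq_map => i; rewrite perm1.
  apply: perm_map; apply: uniq_perm.
  - by rewrite (map_inj_uniq (@perm_inj _ σ)) enum_uniq.
  - exact: enum_uniq.
  move=> i; rewrite mem_enum; apply/mapP; exists ((σ^-1)%g i); rewrite ?mem_enum //.
  by rewrite permKV.
set m := med (x 1%g).
have medE : forall σ, med (x σ) = m.
  move=> σ; rewrite /m /med /med_cnt !sz.
  by have /perm_sort_leP -> := pe σ.
set B := blk (x 1%g).
have blkE : forall σ, blk (x σ) = B by move=> σ; rewrite /B /blk /dR !sz.
set q := nblocks (x 1%g).
have nbE : forall σ, nblocks (x σ) = q by move=> σ; rewrite /q /nblocks !blkE !sz.
set B' : R := d%:R `^ (2/3).
set t : R := d%:R `^ (3^-1 + gamma).
set lo := Num.floor (B' / 2 - t).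
set hi := Num.ceil (B' / 2 + t).
have loE : forall σ, rank_lo gamma (x σ) = lo by move=> σ; rewrite /rank_lo /dR sz.
have hiE : forall σ, rank_hi gamma (x σ) = hi by move=> σ; rewrite /rank_hi /dR sz.
have Bdef : B = `|Num.ceil B'|%N by rewrite /B /blk /dR sz.
have [[hB1 hBd hB2 hB3] [/andP [hBn1 hBnd] ht1 ht2]] := @real_facts R gamma d g0 d1.
rewrite -/B' -/t -Bdef in hB1 hBd ht1 hB2 hB3 hBn1 hBnd ht2.
have qdef : q = ((d + B - 1) %/ B)%N by rewrite /q /nblocks -/B sz.
pose Xs := [set i | s i < m].
pose Xl := [set i | m < s i].
have mx : m \in x 1%g by apply: med_in; rewrite sz.
have cnt : forall (P : pred R), count P (x 1%g) = #|[set i | P (s i)]|.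
  move=> P; rewrite /x /ordering count_map count_card ?enum_uniq //.
  by apply: eq_card => j; rewrite !inE mem_enum perm1.
have cXs : #|Xs| = (d./2 - 1)%N.
  rewrite -(cnt (fun z => z < m)) /m.
  rewrite count_lt_nth_sort ?ux // /med_cnt sz //.
  have : (d./2 <= d)%N by rewrite -{2}(odd_double_half d); lia.
  lia.
have cXl : #|Xl| = (d - 1 - (d./2 - 1))%N.
  have := @count3 R (x 1%g) m (ux 1%g) mx; rewrite sz.
  rewrite (cnt (fun z => z < m)) (cnt (fun z => m < z)) -/Xs -/Xl cXs.
  lia.
have hXs : (#|Xs| * 2 <= d)%N.
  rewrite cXs; have := odd_double_half d; lia.
have hXl : (#|Xl| * 2 <= d + 1)%N.
  rewrite cXl; have := odd_double_half d; lia.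
pose P := fun i : nat => take B (drop (i * B) (enum 'I_d)).
pose A := fun i => [set j in P i].
have uP : forall i, uniq (P i) by move=> i; rewrite take_uniq // drop_uniq // enum_uniq.
have full : forall i, (i.+1 < q)%N -> (i.+1 * B <= d)%N.
  move=> i; rewrite qdef leq_divRL // !mulSn; lia.
have cA : forall i, (i.+1 < q)%N -> #|A i| = B.
  move=> i hiq; rewrite /A cardsE; move/card_uniqP: (uP i) => ->.
  rewrite /P size_takel // size_drop size_enum_ord; exact: arith4 (full i hiq).
have blockE : forall σ i, block (x σ) i = map (fun j => s (σ j)) (P i).
  by move=> σ i; rewrite /block blkE /P map_take map_drop.
have KsE : forall σ i, count (fun z => z < m) (block (x σ) i) = #|[set j in A i | σ j \in Xs]|.
  by move=> σ i; rewrite blockE count_map count_card //; apply: eq_card => j; rewrite !inE.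
have KlE : forall σ i, count (fun z => m < z) (block (x σ) i) = #|[set j in A i | σ j \in Xl]|.
  by move=> σ i; rewrite blockE count_map count_card //; apply: eq_card => j; rewrite !inE.
set k1 := `|hi|%N.
set k2 := `|(B%:Z + 1 - lo)%R|%N.
pose Es := fun i => [set σ : 'S_d | (k1 <= #|[set j in A i | σ j \in Xs]|)%N].
pose El := fun i => [set σ : 'S_d | (k2 <= #|[set j in A i | σ j \in Xl]|)%N].
have hi0 : 0 <= hi by rewrite /hi ceil_ge0; have := powR_ge0 d%:R (3^-1 + gamma); lra.
have loR : lo%:~R <= B' / 2 - t by rewrite /lo floor_le.
have hiR : B' / 2 + t <= hi%:~R by rewrite /hi ceil_ge.
have loB : lo <= B%:Z.
  rewrite -(ler_int R); apply: (le_trans loR); apply: le_trans hB2; lra.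
have claim : forall σ, ~~ successful gamma (x σ) -> exists2 i, (i < q.-1)%N & σ \in Es i :|: El i.
  move=> σ hf.
  have [i [iq mb hr]] := @fail_block R gamma (x σ) (ltac:(by rewrite sz)) (ltac:(by rewrite blkE)) hf.
  rewrite nbE in iq; rewrite medE in mb hr; rewrite loE hiE in hr.
  exists i; first by move: iq; case: (q).
  have hsize : size (block (x σ) i) = B.
    rewrite blockE size_map /P size_takel // size_drop size_enum_ord.
    exact: arith4 (full i iq).
  have ub : uniq (block (x σ) i).
    by rewrite blockE (map_inj_uniq (f := fun j => s (σ j))) // => a b /sinj /perm_inj.
  have c3 := @count3 R _ m ub mb.
  rewrite hsize KsE KlE in c3.
  rewrite /rank_in /nsmaller KsE in hr.
  case/orP: hr => h; apply/setUP; [right|left]; rewrite inE.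
    have k2E : k2%:Z = B%:Z + 1 - lo by rewrite /k2 gez0_abs // arith3.
    exact: arith1 c3 h k2E.
  have k1E : k1%:Z = hi by rewrite /k1 gez0_abs.
  exact: arith2 h k1E.
set succ := [set σ : 'S_d | successful gamma (ordering s σ)].
have hF : (#|~: succ| <= \sum_(i < q.-1) (#|Es i| + #|El i|))%N.
  apply: leq_trans (@union_bound _ _ q.-1 (fun i => Es i :|: El i) _) _.
    by move=> σ; rewrite !inE => hf; exact: claim.
  by apply: leq_sum => i _; rewrite cardsU leq_subr.
set e := expR (- ((t - 2^-1) ^+ 2 / (4 * B%:R))).
have dR0 : (0 : R) < d%:R by rewrite ltr0n.
have hEs : forall i, (i < q.-1)%N -> (#|Es i|%:R : R) <= d`!%:R * e.
  move=> i hiq; have iq : (i.+1 < q)%N by move: hiq; case: (q).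
  rewrite /e -(cA i iq); apply: chernoff2 => //; rewrite ?cA //; first lra.
  have p1 : B%:R * (#|Xs|%:R / d%:R) <= B%:R / 2 :> R.
    rewrite mulrA ler_pdivrMr //.
    have : (#|Xs| * 2)%:R <= d%:R :> R by rewrite ler_nat.
    rewrite natrM => h; have B0 : (0:R) <= B%:R by rewrite ler0n.
    nra.
  have k1R : k1%:R = hi%:~R :> R by rewrite /k1 natr_absz ger0_norm.
  rewrite k1R; lra.
have hEl : forall i, (i < q.-1)%N -> (#|El i|%:R : R) <= d`!%:R * e.
  move=> i hiq; have iq : (i.+1 < q)%N by move: hiq; case: (q).
  rewrite /e -(cA i iq); apply: chernoff2 => //; rewrite ?cA //; first lra.
  have p2 : B%:R * (#|Xl|%:R / d%:R) <= B%:R / 2 + 2^-1 :> R.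
    have h := @arith6 B _ _ hXl hBnd.
    have : ((B * #|Xl| * 2)%:R <= ((B + 1) * d)%:R :> R) by rewrite ler_nat.
    rewrite !natrM natrD => h2.
    rewrite mulrA ler_pdivrMr //; lra.
  have k2R : k2%:R = B%:R + 1 - lo%:~R :> R.
    rewrite /k2 natr_absz ger0_norm ?arith3 //.
    by rewrite !intrD intrN.
  rewrite k2R; lra.
have hF' : (#|~: succ|%:R : R) <= (q.-1)%:R * (2 * (d`!%:R * e)).
  apply: (@le_trans _ _ (\sum_(i < q.-1) ((#|Es i| + #|El i|)%:R : R))).
    by rewrite -natr_sum ler_nat.
  apply: (@le_trans _ _ (\sum_(i < q.-1) (2 * (d`!%:R * e)))).
    apply: ler_sum => i _; rewrite natrD.
    have := hEs i (ltn_ord i); have := hEl i (ltn_ord i); lra.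
  by rewrite big_const_ord iter_addr addr0 [X in _ <= X]mulr_natl.
have qd : (q.-1 <= d)%N.
  apply: leq_trans (leq_pred q) _.
  by rewrite -ltnS qdef ltn_divLR // arith5.
set D := d%:R `^ (2 * gamma).
have D0 : 0 <= D by rewrite /D powR_ge0.
have eD : e <= expR (- (D / 32)).
  rewrite /e ler_expR lerN2 ler_pdivlMr; last by rewrite mulr_gt0 // ltr0n.
  have h1 : D * B%:R <= D * (2 * B') by rewrite ler_wpM2l //; lra.
  have h2 : t ^+ 2 / 4 <= (t - 2^-1) ^+ 2 by nra.
  rewrite ht2 -/D in h2.
  lra.
have e0 : 0 <= e by rewrite /e expR_ge0.
have f0 : (0 : R) < d`!%:R by rewrite ltr0n fact_gt0.
have hF2 : (#|~: succ|%:R : R) / d`!%:R <= 2 * d%:R * expR (- (D / 32)).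
  rewrite ler_pdivrMr //; apply: (le_trans hF').
  have : ((q.-1)%:R : R) <= d%:R by rewrite ler_nat.
  move=> h; have h3 : (q.-1)%:R * (2 * (d`!%:R * e)) <= d%:R * (2 * (d`!%:R * e)).
    by apply: ler_wpM2r => //; rewrite mulr_ge0 // mulr_ge0 // ler0n.
  apply: (le_trans h3).
  have : d%:R * (2 * (d`!%:R * e)) <= d%:R * (2 * (d`!%:R * expR (- (D / 32)))).
    by rewrite ler_wpM2l ?ler0n // ler_wpM2l // ler_wpM2l ?ler0n.
  move=> h4; apply: (le_trans h4).
  have -> : d%:R * (2 * (d`!%:R * expR (- (D / 32)))) = 2 * d%:R * expR (- (D / 32)) * d`!%:R by ring.
  by [].
have hF3 : (#|~: succ|%:R : R) / d`!%:R <= expR (- (64^-1 * D)).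
  apply: (le_trans hF2).
  have : 2 * d%:R * expR (- (D / 32)) <= expR (D / 64) * expR (- (D / 32)).
    by rewrite ler_wpM2r ?expR_ge0.
  move=> h; apply: (le_trans h); rewrite -expRD ler_expR; lra.
have cs : (#|succ| + #|~: succ| = d`!)%N by rewrite cardsC card_Sn.
rewrite /succ_prob -/succ.
have -> : (#|succ|%:R : R) = d`!%:R - #|~: succ|%:R by rewrite -cs natrD addrK.
rewrite mulrBl divff ?gt_eqF //; lra.
Qed.

Theorem propositionC2 (R : realType) (gamma : R) :
  0 < gamma ->
  (exists c : R, 0 < c /\
     exists d0 : nat, forall (d : nat) (s : 'I_d -> R),
       (d0 <= d)%N -> injective s -> (forall i, 0 < s i < 1) ->
       1 - expR (- (c * d%:R `^ (2 * gamma))) <= succ_prob gamma s)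
  /\
  (forall (d : nat) (s : 'I_d -> R) (sigma : 'S_d),
     injective s -> (forall i, 0 < s i < 1) ->
     successful gamma (ordering s sigma) ->
     output gamma (ordering s sigma) = Some (med (ordering s sigma))).
Proof.
move=> g0; split; first exact: part1.
move=> d s sigma sinj _ hs; apply: part2 => //.
rewrite /ordering map_inj_uniq ?enum_uniq //.
by move=> i j /sinj /perm_inj.
Qed.
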